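(* Let $(X,d)$ be a metric space, $m,L\in\mathbb{N}$, $a_0,\dots,a_{m-1}\ge0$ with $\sum_{i=0}^{m-1}a_i<1$, and let $\mathcal{S}=(X,(\phi_j)_{j=1}^L,(p_j)_{j=1}^L)$ be a GIFS with probabilities of order $m$ consisting of $(a_0,\dots,a_{m-1})$-contractions. Then the map $\overline{M}_\mathcal{S}:\mathcal{P}(X)\to\mathcal{P}(X)$, $\overline{M}_\mathcal{S}(\mu):=M_\mathcal{S}(\mu,\dots,\mu)$, is a Banach contraction with respect to $d_{MK}$, with Lipschitz constant $\mathrm{Lip}(\overline{M}_\mathcal{S})\le\sum_{i=0}^{m-1}a_i$.
   Context: $X^m$ carries the maximum metric. A map $f:X^m\to X$ is an $(a_0,\dots,a_{m-1})$-contraction if $d(f(x_0,\dots,x_{m-1}),f(y_0,\dots,y_{m-1}))\le\sum_{i}a_i d(x_i,y_i)$. A GIFS with probabilities of order $m$ is $(X,(\phi_j)_{j=1}^L,(p_j)_{j=1}^L)$ with continuous $\phi_j:X^m\to X$ and $p_j>0$, $\sum_j p_j=1$. $\mathcal{P}(X)$ is the set of Borel probability measures on $X$ with compact support. $w^\sharp\mu(B):=\mu(w^{-1}(B))$. $M_\mathcal{S}(\mu_0,\dots,\mu_{m-1}):=\sum_{j}p_j\phi_j^\sharp(\mu_0\times\dots\times\mu_{m-1})$. $d_{MK}(\mu,\nu)=\sup\{|\int f d\mu-\int f d\nu|: \mathrm{Lip}(f)\le1\}$. A Banach contraction is a map with Lipschitz constant $<1$. *)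

(* Defs.v *)
From HB Require Import structures.
From mathcomp Require Import all_boot all_order all_algebra.
From mathcomp Require Import all_classical all_reals all_analysis.
Set Implicit Arguments. Unset Strict Implicit. Unset Printing Implicit Defensive.
Import Order.TTheory GRing.Theory Num.Theory.
Import numFieldNormedType.Exports.
Local Open Scope classical_set_scope.
Local Open Scope ring_scope.

Section defs.
Variables (R : realType) (X : metricType R).

End defs.

(* The library's sigma-algebra construction needs a pointed carrier; we
   equip X with a point x0 through an alias (the point plays no other role). *)
Definition ptX (R : realType) (X : metricType R) (x0 : X) : Type := X.
HB.instance Definition _ (R : realType) (X : metricType R) (x0 : X) :=
  Choice.on (ptX x0).
HB.instance Definition _ (R : realType) (X : metricType R) (x0 : X) :=
  isPointed.Build (ptX x0) x0.
Definition ptXm (R : realType) (X : metricType R) (x0 : X) (m : nat) : Type :=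
  'I_m -> X.
HB.instance Definition _ (R : realType) (X : metricType R) (x0 : X) m :=
  Choice.on (ptXm x0 m).
HB.instance Definition _ (R : realType) (X : metricType R) (x0 : X) m :=
  isPointed.Build (ptXm x0 m) (fun _ => x0).

Section defs.
Variables (R : realType) (X : metricType R).

Notation BorelX x0 := (@g_sigma_algebraType (ptX x0) (@open X)).

Definition maxm_open (m : nat) (A : set ('I_m -> X)) : Prop :=
  forall x, A x -> exists2 e : R, 0 < e &
    forall y : 'I_m -> X, (forall i, mdist (x i) (y i) < e) -> A y.

Notation BorelXm x0 m := (@g_sigma_algebraType (ptXm x0 m) (@maxm_open m)).

Definition maxm_continuous (m : nat) (f : ('I_m -> X) -> X) : Prop :=
  forall x (e : R), 0 < e -> exists2 d : R, 0 < d &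
    forall y, (forall i, mdist (x i) (y i) < d) -> mdist (f x) (f y) < e.

Definition gifs_contraction (m : nat) (a : 'I_m -> R) (f : ('I_m -> X) -> X) :=
  forall x y : 'I_m -> X, mdist (f x) (f y) <= \sum_(i < m) a i * mdist (x i) (y i).

Definition in_PX (x0 : X) (mu : {measure set (BorelX x0) -> \bar R}) : Prop :=
  mu setT = 1%E /\ exists K : set X, compact K /\ mu (~` K) = 0%E.

Definition is_product_measure (x0 : X) (m : nat) (mus : 'I_m -> {measure set (BorelX x0) -> \bar R})
  (pi : {measure set (BorelXm x0 m) -> \bar R}) : Prop :=
  forall B : 'I_m -> set X, (forall i, measurable (B i : set (BorelX x0))) ->
    pi [set x : 'I_m -> X | forall i, B i (x i)] = (\prod_(i < m) mus i (B i))%E.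

Definition Lip1 (f : X -> R) : Prop := forall x y, `|f x - f y| <= mdist x y.

Definition dMK (x0 : X) (mu nu : {measure set (BorelX x0) -> \bar R}) : \bar R :=
  ereal_sup [set (`| \int[mu]_x (f x)%:E - \int[nu]_x (f x)%:E |)%E | f in Lip1].

End defs.

Notation BorelX x0 := (@g_sigma_algebraType (ptX x0) (@open _)).
Notation BorelXm x0 m := (@g_sigma_algebraType (ptXm x0 m) (@maxm_open _ _ m)).

(* Main.v *)
Require Import Defs.
From HB Require Import structures.
From mathcomp Require Import all_boot all_order all_algebra finmap.
From mathcomp Require Import all_classical all_reals all_analysis.
From mathcomp Require Import measurable_realfun.
From mathcomp Require Import ring lra.
Import Order.TTheory GRing.Theory Num.Theory.
Local Open Scope classical_set_scope.
Local Open Scope ring_scope.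

Set Implicit Arguments. Unset Strict Implicit.

Section A.
Variables (R : realType) (X : metricType R) (x0 : X).

Lemma openXP (U : set X) : open U <->
  (forall x, U x -> exists2 e : R, 0 < e & forall y, mdist x y < e -> U y).
Proof.
rewrite openE; split.
- move=> oU x /oU; rewrite /interior => /nbhs_ballP [e e0 he].
  by exists e => // y hy; apply: he; rewrite ballEmdist.
- move=> h x /h [e e0 he]; rewrite /interior; apply/nbhs_ballP.
  by exists e => // y; rewrite ballEmdist; apply: he.
Qed.

Lemma open_measX (U : set X) : open U -> measurable (U : set (BorelX x0)).
Proof. by move=> oU; apply: sub_sigma_algebra. Qed.

Lemma maxm_measX m (U : set ('I_m -> X)) : maxm_open U ->
  measurable (U : set (BorelXm x0 m)).
Proof. by move=> oU; apply: sub_sigma_algebra. Qed.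

Lemma proj_measurable m (i : 'I_m) :
  measurable_fun setT (fun x : BorelXm x0 m => (x i : BorelX x0)).
Proof.
apply: (@measurability _ _ (BorelXm x0 m) (BorelX x0) setT _ (@open X)) => //.
move=> _ [U oU <-]; rewrite setTI; apply: maxm_measX => x /= Uxi.
have [e e0 he] := (proj1 (openXP U) oU _ Uxi).
by exists e => // y hy; apply: he.
Qed.

Lemma cont_measurable m (f : ('I_m -> X) -> X) : maxm_continuous f ->
  measurable_fun setT (f : BorelXm x0 m -> BorelX x0).
Proof.
move=> cf; apply: (@measurability _ _ (BorelXm x0 m) (BorelX x0) setT _ (@open X)) => //.
move=> _ [U oU <-]; rewrite setTI; apply: maxm_measX => x /= Ufx.
have [e e0 he] := (proj1 (openXP U) oU _ Ufx).
have [d d0 hd] := cf x e e0.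
by exists d => // y hy; apply: he; apply: hd.
Qed.

Lemma lip1_measurable (h : X -> R) : Lip1 h ->
  measurable_fun setT (h : BorelX x0 -> R).
Proof.
move=> lh; apply: (@measurability _ _ (BorelX x0) R setT _ _ (measurable_realfun.RGenOpens.measurableE R)).
move=> _ [_ [a [b ->]] <-]; rewrite setTI; apply: open_measX.
apply/openXP => x /=; rewrite in_itv /= => /andP [ax xb].
exists (Num.min (h x - a) (b - h x)); first by rewrite lt_min !subr_gt0 ax xb.
move=> y; rewrite lt_min => /andP [h1 h2].
have := lh x y; rewrite ler_norml => /andP [l1 l2].
rewrite in_itv /=; apply/andP; split; lra.
Qed.

End A.

Set Implicit Arguments. Unset Strict Implicit.

Section B.
Variable (R : realType).

Lemma in_bigsetU (T : Type) (I : eqType) (s : seq I) (F : I -> set T) x :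
  (\big[setU/set0]_(i <- s) F i) x -> exists2 i, i \in s & F i x.
Proof.
elim: s => [|i s IH]; rewrite ?big_nil ?big_cons //= => -[Fx|/IH [j js Fj]].
  by exists i => //; rewrite mem_head.
by exists j => //; rewrite inE js orbT.
Qed.

Lemma bigsetU_in (T : Type) (I : eqType) (s : seq I) (F : I -> set T) x i :
  i \in s -> F i x -> (\big[setU/set0]_(i <- s) F i) x.
Proof.
elim: s => [//|j s IH]; rewrite big_cons inE => /orP [/eqP <-|iNs] Fx.
  by left.
by right; apply: IH.
Qed.

Lemma measure_seq_part d (T : measurableType d) (rho : {measure set T -> \bar R})
  (I : eqType) (P : I -> set T) (G : set T) (s : seq I) :
  uniq s -> (forall i, measurable (P i)) ->
  (forall i j, i != j -> P i `&` P j = set0) -> measurable G ->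
  rho (G `&` \big[setU/set0]_(i <- s) P i) = (\sum_(i <- s) rho (G `&` P i))%E.
Proof.
move=> + mP dP mG; elim: s => [|i s IH]; first by rewrite !big_nil setI0 measure0.
rewrite /= => /andP [iNs us]; rewrite !big_cons setIUr measureU.
- by rewrite -(IH us).
- exact: measurableI.
- by apply: measurableI => //; apply: bigsetU_measurable.
- apply/seteqP; split => [x [[_ Pix] [_ Ux]]|//].
  have [j js Pjx] := in_bigsetU Ux.
  have ij : i != j by apply: contraNneq iNs => ->.
  by rewrite -(dP _ _ ij); split.
Qed.

Lemma measure_part d (T : measurableType d) (rho : {measure set T -> \bar R})
  (I : finType) (P : I -> set T) (G : set T) :
  (forall i, measurable (P i)) ->
  (forall i j, i != j -> P i `&` P j = set0) ->
  rho (~` \big[setU/set0]_(i : I) P i) = 0%E -> measurable G ->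
  rho G = (\sum_(i : I) rho (G `&` P i))%E.
Proof.
move=> mP dP n0 mG.
have mU : measurable (\big[setU/set0]_(i : I) P i) by apply: bigsetU_measurable.
rewrite (measureDI rho mG mU) -measure_seq_part ?index_enum_uniq //.
rewrite (@subset_measure0 _ _ _ rho (G `\` _) (~` (\big[setU/set0]_(i : I) P i))) ?add0e //.
- exact: measurableD.
- exact: measurableC.
Qed.

End B.

Set Implicit Arguments. Unset Strict Implicit.

Section C.
Variables (R : realType) (X : metricType R) (x0 : X).

Lemma bnd_integrable d (T : measurableType d) (rho : {measure set T -> \bar R})
  (A : set T) (f : T -> R) (B : R) :
  measurable A -> (rho A < +oo)%E -> measurable_fun A f ->
  (forall x, A x -> `|f x| <= B) -> rho.-integrable A (EFin \o f).
Proof.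
move=> mA Afin mf hb; apply/integrableP; split; first exact/measurable_EFinP.
have finA : rho A \is a fin_num by rewrite ge0_fin_numE ?measure_ge0.
apply: (@le_lt_trans _ _ ((`|B|)%:E * rho A)%E).
  apply: integral_le_bound => //.
  - by apply: measurableT_comp => //; exact/measurable_EFinP.
  - by apply: aeW => x Ax /=; rewrite lee_fin (le_trans (hb _ Ax)) ?ler_norm.
by rewrite -(fineK finA) -EFinM ltry.
Qed.

Lemma Qlem (rho : {measure set (BorelX x0) -> \bar R}) (N : nat)
  (P : 'I_N -> set (BorelX x0)) (c : 'I_N -> X) (h : X -> R) (dl : R) :
  0 < dl -> rho setT = 1%E -> Lip1 h ->
  (forall k, measurable (P k)) ->
  (forall k l, k != l -> P k `&` P l = set0) ->
  rho (~` \big[setU/set0]_(k < N) P k) = 0%E ->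
  (forall k x, P k x -> mdist (c k) x < dl) ->
  exists r : R, (\int[rho]_x (h x)%:E = r%:E)%E /\
    `| r - \sum_(k < N) h (c k) * fine (rho (P k)) | <= dl.
Proof.
move=> dl0 r1 lh mP dP n0 hc.
set U := \big[setU/set0]_(k < N) P k.
have mU : measurable U by apply: bigsetU_measurable.
have mh : measurable_fun setT (h : BorelX x0 -> R) by apply: lip1_measurable.
have mhE : measurable_fun setT (EFin \o (h : BorelX x0 -> R)).
  exact/measurable_EFinP.
have finS (S : set (BorelX x0)) : measurable S -> rho S \is a fin_num.
  move=> mS; rewrite ge0_fin_numE ?measure_ge0 //.
  apply: (@le_lt_trans _ _ (rho setT)); last by rewrite r1 ltry.
  by apply: le_measure; rewrite ?inE.
have sumP : \sum_(k < N) fine (rho (P k)) = 1.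
  apply: EFin_inj; rewrite EFin_sum_fine; last by move=> k _; apply: finS.
  rewrite -r1 (measure_part mP dP n0 measurableT).
  by apply: eq_bigr => k _; rewrite setTI.
set M := \sum_(k < N) `|h (c k)| + dl.
have hck k x : P k x -> `|h x - h (c k)| <= dl.
  move=> Pkx; rewrite distrC; apply: (le_trans (lh _ _)); apply: ltW.
  exact: hc.
have hb x : U x -> `|h x| <= M.
  move=> Ux; have [k _ Pkx] := in_bigsetU Ux.
  have h1 : `|h (c k)| <= \sum_(k < N) `|h (c k)|.
    by rewrite (bigD1 k) //= lerDl sumr_ge0.
  have h2 := hck k x Pkx.
  rewrite /M; apply: (le_trans _ (lerD h1 h2)).
  by rewrite -[X in `|X|](subrK (h (c k))) addrC ler_normD.
have M0 : 0 <= M by rewrite /M addr_ge0 ?sumr_ge0 // ltW.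
have ih : rho.-integrable setT (EFin \o (h : BorelX x0 -> R)).
  apply/integrableP; split => //.
  rewrite (ge0_negligible_integral (measurableC mU) measurableT _ _ n0); last 2 first.
  - by apply: measurableT_comp.
  - by move=> x _; exact: abse_ge0.
  rewrite setTD setCK.
  apply: (@le_lt_trans _ _ (M%:E * rho U)%E).
    apply: integral_le_bound => //.
    - by apply: measurableT_comp => //; apply: (measurable_funS measurableT) => //.
    - by apply: aeW => x Ux /=; rewrite lee_fin hb.
  by rewrite -(fineK (finS _ mU)) -EFinM ltry.
rewrite (negligible_integral (measurableC mU) measurableT ih n0) setTD setCK.
rewrite /U (integral_bigsetU_EFin rho mP (index_enum_uniq _)); last 2 first.
- move=> i j _ _ [x [Pi Pj]]; apply/eqP; apply: contraT => ij.
  by have : (P i `&` P j) x by []; rewrite dP.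
- by apply: (measurable_funS measurableT).
pose e k := fine (\int[rho]_(x in P k) (h x - h (c k))%:E)%E.
have he k : (\int[rho]_(x in P k) (h x)%:E = (h (c k) * fine (rho (P k)) + e k)%:E)%E
    /\ `|e k| <= dl * fine (rho (P k)).
  have finPk := finS _ (mP k).
  have Pkoo : (rho (P k) < +oo)%E by rewrite -ge0_fin_numE ?measure_ge0.
  have mg : measurable_fun (P k) (fun x : BorelX x0 => h x - h (c k)).
    apply: measurable_funB; last exact: measurable_cst.
    by apply: (measurable_funS measurableT).
  have i1 : rho.-integrable (P k) (EFin \o (fun x : BorelX x0 => h x - h (c k))).
    exact: (bnd_integrable (mP k) Pkoo mg (@hck k)).
  have i2 : rho.-integrable (P k) (EFin \o (fun _ : BorelX x0 => h (c k))).
    apply: (bnd_integrable (B := `|h (c k)|) (mP k) Pkoo) => //.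
  have fe := integrable_fin_num (mP k) i1.
  split.
    transitivity (\int[rho]_(x in P k) ((h (c k))%:E + (h x - h (c k))%:E))%E.
      by apply: eq_integral => x _; rewrite -EFinD addrC subrK.
    rewrite (integralD (mP k) i2 i1).
    have := integral_cst rho (mP k) (h (c k))%:E; rewrite /cst => ->.
    by rewrite EFinD EFinM /e !fineK.
  have H : (`|\int[rho]_(x in P k) (h x - h (c k))%:E| <= dl%:E * rho (P k))%E.
    apply: le_trans (le_abse_integral _ (mP k) _) _.
      exact/measurable_EFinP.
    apply: integral_le_bound => //.
    - by apply: measurableT_comp => //; exact/measurable_EFinP.
    - by rewrite lee_fin ltW.
    - by apply: aeW => x Pkx /=; rewrite lee_fin hck.
  move: H; rewrite -(fineK fe) -(fineK finPk) -EFinM /= lee_fin.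
  by rewrite /e.
exists (\sum_(k < N) (h (c k) * fine (rho (P k)) + e k)); split.
  by rewrite -sumEFin; apply: eq_bigr => k _; exact: (he k).1.
rewrite big_split /= [X in X - _]addrC addrK.
apply: le_trans (ler_norm_sum _ _ _) _.
apply: (@le_trans _ _ (\sum_(k < N) dl * fine (rho (P k)))).
  by apply: ler_sum => k _; exact: (he k).2.
by rewrite -mulr_sumr sumP mulr1.
Qed.

End C.

Set Implicit Arguments. Unset Strict Implicit.

Definition pX (R : realType) (X : metricType R) (x0 : X) : Type := X.
Arguments pX {R X}.
HB.instance Definition _ (R : realType) (X : metricType R) (x0 : X) :=
  Metric.on (pX x0).
HB.instance Definition _ (R : realType) (X : metricType R) (x0 : X) :=
  isPointed.Build (pX x0) x0.

Lemma bigsetU_ord_in (T : Type) n (Pr : pred 'I_n) (F : 'I_n -> set T) x i :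
  Pr i -> F i x -> (\big[setU/set0]_(i < n | Pr i) F i) x.
Proof. by move=> Pi Fx; rewrite (bigD1 i) //; left. Qed.

Lemma in_bigsetU_ord (T : Type) n (Pr : pred 'I_n) (F : 'I_n -> set T) x :
  (\big[setU/set0]_(i < n | Pr i) F i) x -> exists i, Pr i /\ F i x.
Proof.
elim/big_ind: _ => //; last by move=> i Pi Fx; exists i.
by move=> A B IA IB [/IA|/IB].
Qed.

Section D.
Variables (R : realType) (X : metricType R) (x0 : X).

Lemma compact_meas (K : set X) : compact K -> measurable (K : set (BorelX x0)).
Proof.
move=> cK; have clK : closed K := compact_closed (@metric_hausdorff R X) cK.
rewrite -[K]setCK; apply: measurableC; apply: open_measX.
exact: closed_openC.
Qed.

Lemma cover_part (K : set X) (dl : R) : compact K -> 0 < dl ->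
  exists N (c : 'I_N -> X) (P : 'I_N -> set (BorelX x0)),
  [/\ (forall k, measurable (P k)),
      (forall k l, k != l -> P k `&` P l = set0),
      \big[setU/set0]_(k < N) P k = K &
      (forall k x, P k x -> mdist (c k) x < dl)].
Proof.
move=> cK dl0.
have := cK; rewrite (_ : compact K = @compact (pX x0) K) // compact_cover.
move=> /(_ X K (fun y => (@ball _ X y dl)°)).
case.
- by move=> i _; exact: open_interior.
- move=> x Kx; exists x => //; rewrite /interior; exact: nbhsx_ballx.
move=> D' _ cov.
set s := (D' : seq X).
set B := fun y : X => (@ball _ X y dl)°.
have mB y : measurable (B y : set (BorelX x0)) by apply: open_measX; exact: open_interior.
exists (size s), (fun k => nth x0 s k).
exists (fun k : 'I_(size s) => K `&` B (nth x0 s k) `\`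
   \big[setU/set0]_(l < size s | (l < k)%N) B (nth x0 s l)); split.
- move=> k; apply: measurableD; first by apply: measurableI => //; exact: compact_meas.
  by apply: bigsetU_measurable => l _.
- move=> k l; rewrite neq_ltn => /orP [] kl; apply/seteqP; split => // x /=.
  + move=> [[[_ Bk] _] [_ nUl]]; apply: nUl.
    exact: (@bigsetU_ord_in _ _ (fun j : 'I_(size s) => (j < l)%N) _ _ k).
  + move=> [[_ nUk] [[_ Bl] _]]; apply: nUk.
    exact: (@bigsetU_ord_in _ _ (fun j : 'I_(size s) => (j < k)%N) _ _ l).
- apply/seteqP; split => x.
    by move=> Ux; have [k _ [[]]] := in_bigsetU Ux.
  move=> Kx; have [i Di Bix] := cov x Kx.
  pose a := fun y => `[< B y x >].
  have hs : has a s by apply/hasP; exists i => //; apply/asboolP.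
  have ks := hs; rewrite has_find in ks.
  apply: (@bigsetU_in _ _ _ _ _ (Ordinal ks)); first by rewrite mem_index_enum.
  split; first by split => //; have := nth_find x0 hs; move/asboolP.
  move=> Ux; have [l [/= lk Bl]] := in_bigsetU_ord Ux.
  by have := before_find x0 lk; rewrite /a; move/asboolPn.
- move=> k x [[_ Bx] _]; have := interior_subset Bx; rewrite ballEmdist //.
Qed.

End D.

Set Implicit Arguments. Unset Strict Implicit.

Section E.
Variables (R : realType).

Lemma fin1 d (T : measurableType d) (rho : {measure set T -> \bar R}) S :
  rho setT = 1%E -> measurable S -> rho S \is a fin_num.
Proof.
move=> r1 mS; rewrite ge0_fin_numE ?measure_ge0 //.
apply: (@le_lt_trans _ _ (rho setT)); last by rewrite r1 ltry.
by apply: le_measure; rewrite ?inE.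
Qed.

Lemma fine_ge0m d (T : measurableType d) (rho : {measure set T -> \bar R}) S :
  0 <= fine (rho S).
Proof. by apply: fine_ge0; apply: measure_ge0. Qed.

Lemma fine_part d (T : measurableType d) (rho : {measure set T -> \bar R})
  (I : finType) (P : I -> set T) (G : set T) :
  rho setT = 1%E ->
  (forall i, measurable (P i)) ->
  (forall i j, i != j -> P i `&` P j = set0) ->
  rho (~` \big[setU/set0]_(i : I) P i) = 0%E -> measurable G ->
  fine (rho G) = \sum_(i : I) fine (rho (G `&` P i)).
Proof.
move=> r1 mP dP n0 mG; apply: EFin_inj.
rewrite EFin_sum_fine; last by move=> i _; apply: fin1 => //; exact: measurableI.
by rewrite fineK ?fin1 // (measure_part mP dP n0 mG).
Qed.

End E.

Section G1.
Variables (R : realType) (X : metricType R) (x0 : X).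

Lemma G1 m L (phi : 'I_L -> ('I_m -> X) -> X) (p : 'I_L -> R)
  (pi : {measure set (BorelXm x0 m) -> \bar R})
  (M : {measure set (BorelX x0) -> \bar R})
  (I : finType) (Rk : I -> set (BorelXm x0 m)) (z : I -> ('I_m -> X))
  N (Q : 'I_N -> set (BorelX x0)) (e : 'I_N -> X) (f : X -> R) (dl eps : R) :
  (forall j, 0 <= p j) -> \sum_(j < L) p j = 1 -> Lip1 f -> pi setT = 1%E ->
  (forall j, measurable_fun setT (phi j : BorelXm x0 m -> BorelX x0)) ->
  (forall B, measurable B ->
     M B = (\sum_(j < L) (p j)%:E * pi (phi j @^-1` B))%E) ->
  (forall k, measurable (Rk k)) ->
  (forall k l, k != l -> Rk k `&` Rk l = set0) ->
  pi (~` \big[setU/set0]_(k : I) Rk k) = 0%E ->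
  (forall k x j, Rk k x -> mdist (phi j x) (phi j (z k)) <= eps) ->
  (forall l, measurable (Q l)) ->
  (forall k l, k != l -> Q k `&` Q l = set0) ->
  (forall j, pi (~` \big[setU/set0]_(l < N) (phi j @^-1` Q l)) = 0%E) ->
  (forall l y, Q l y -> mdist (e l) y < dl) ->
  `| \sum_(l < N) f (e l) * fine (M (Q l)) -
     \sum_(j < L) p j * \sum_(k : I) f (phi j (z k)) * fine (pi (Rk k)) |
   <= dl + eps.
Proof.
move=> p0 p1 lf pi1 mphi hM mR dR nR hz mQ dQ nQ he.
pose Phi j l := phi j @^-1` Q l.
have mPhi j l : measurable (Phi j l : set (BorelXm x0 m)).
  by rewrite -[Phi j l]setTI; apply: (mphi j) => //.
have dPhi j k l : k != l -> Phi j k `&` Phi j l = set0.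
  move=> kl; apply/seteqP; split => // x [Qk Ql].
  by have : (Q k `&` Q l) (phi j x) by []; rewrite dQ.
have hMQ l : fine (M (Q l)) = \sum_(j < L) p j * fine (pi (Phi j l)).
  rewrite hM // (_ : (\sum_(j < L) (p j)%:E * pi (phi j @^-1` Q l))%E =
    (\sum_(j < L) p j * fine (pi (Phi j l)))%:E) //.
  rewrite -sumEFin; apply: eq_bigr => j _; rewrite EFinM fineK //.
  exact: fin1.
under eq_bigr do rewrite hMQ mulr_sumr.
rewrite exchange_big /= -sumrB.
apply: (le_trans (ler_norm_sum _ _ _)).
apply: (@le_trans _ _ (\sum_(j < L) p j * (dl + eps))); last first.
  by rewrite -mulr_suml p1 mul1r.
apply: ler_sum => j _.
rewrite (_ : \sum_(i < N) _ = p j * \sum_(l < N) f (e l) * fine (pi (Phi j l)));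
  last by rewrite mulr_sumr; apply: eq_bigr => l _; ring.
rewrite -mulrBr normrM ger0_norm ?p0 //; apply: ler_wpM2l => //.
pose w l k := fine (pi (Phi j l `&` Rk k)).
have hA l : fine (pi (Phi j l)) = \sum_(k : I) w l k.
  by rewrite (fine_part pi1 mR dR nR (mPhi j l)).
have hB k : fine (pi (Rk k)) = \sum_(l < N) w l k.
  rewrite (fine_part pi1 (mPhi j) (dPhi j) (nQ j) (mR k)).
  by apply: eq_bigr => l _; rewrite /w setIC.
rewrite (eq_bigr (fun l => \sum_(k : I) f (e l) * w l k)); last first.
  by move=> l _; rewrite -mulr_sumr; congr (_ * _); exact: hA.
rewrite [X in _ - X](eq_bigr (fun k => \sum_(l < N) f (phi j (z k)) * w l k)); last first.
  by move=> k _; rewrite -mulr_sumr; congr (_ * _); exact: hB.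
rewrite [X in _ - X]exchange_big /= -sumrB.
apply: (le_trans (ler_norm_sum _ _ _)).
apply: (@le_trans _ _ (\sum_(l < N) \sum_(k : I) (dl + eps) * w l k)).
  apply: ler_sum => l _; rewrite -sumrB.
  apply: (le_trans (ler_norm_sum _ _ _)); apply: ler_sum => k _.
  rewrite -mulrBl normrM (ger0_norm (fine_ge0m _ _)).
  case: (pselect (exists x, (Phi j l `&` Rk k) x)) => [[x [Px Rx]]|nx].
    apply: ler_wpM2r; first exact: fine_ge0m.
    have h1 := lf (e l) (phi j x).
    have h2 := lf (phi j x) (phi j (z k)).
    have h3 := he l _ Px.
    have h4 := hz k x j Rx.
    apply: (le_trans (ler_distD (f (phi j x)) _ _)).
    apply: lerD; first exact: (le_trans h1 (ltW h3)).
    exact: (le_trans h2 h4).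
  have e0 : Phi j l `&` Rk k = set0.
    by apply/seteqP; split => // x hx; exfalso; apply: nx; exists x.
  by rewrite /w e0 measure0 /= !mulr0.
rewrite (eq_bigr (fun l => (dl + eps) * fine (pi (Phi j l)))); last first.
  by move=> l _; rewrite -mulr_sumr; congr (_ * _); rewrite hA.
rewrite -mulr_sumr.
have hT := fine_part pi1 (mPhi j) (dPhi j) (nQ j) measurableT.
rewrite (eq_bigr (fun l => fine (pi (setT `&` Phi j l)))); last first.
  by move=> l _; rewrite setTI.
by rewrite -hT pi1 /= mulr1.
Qed.

End G1.

Set Implicit Arguments. Unset Strict Implicit.

Section F.
Variables (R : realType) (X : metricType R).
Variables (N : nat) (c : 'I_N -> X) (u v : 'I_N -> R) (E : \bar R).
Hypotheses (u1 : \sum_(k < N) u k = 1) (v1 : \sum_(k < N) v k = 1).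
Hypothesis hE : forall F : X -> R, Lip1 F ->
  (`| \sum_(k < N) F (c k) * (u k - v k) |%:E <= E)%E.

Lemma E_ge0 : (0 <= E)%E.
Proof.
have := hE (F := fun _ => 0) _; rewrite (_ : \sum_(k < N) _ = 0).
  by rewrite normr0; apply; move=> x y; rewrite subrr normr0 mdist_ge0.
by apply: big1 => k _; rewrite mul0r.
Qed.

Lemma one_dim (G : 'I_N -> R) (b : R) : 0 <= b ->
  (forall k k', `|G k - G k'| <= b * mdist (c k) (c k')) ->
  (`| \sum_(k < N) G k * (u k - v k) |%:E <= b%:E * E)%E.
Proof.
move=> b0 hG.
case: N c u v u1 v1 hE G hG => [|n] c' u' v' u1' v1' hE' G hG.
  by move: u1'; rewrite big_ord0 => /esym/eqP; rewrite oner_eq0.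
have [bz|bpos] := eqVneq b 0.
  have -> : \sum_(k < n.+1) G k * (u' k - v' k) = 0.
    rewrite (eq_bigr (fun k => G ord0 * (u' k - v' k))); last first.
      move=> k _; congr (_ * _); have := hG k ord0; rewrite bz mul0r.
      by rewrite normr_le0 subr_eq0 => /eqP.
    by rewrite -mulr_sumr sumrB u1' v1' subrr mulr0.
  by rewrite normr0 bz mul0e.
have bp : 0 < b by rewrite lt_neqAle eq_sym bpos b0.
pose F (x : X) := \big[Order.min/(G ord0 / b + mdist (c' ord0) x)]_(k < n.+1)
   (G k / b + mdist (c' k) x).
have Fle x k : F x <= G k / b + mdist (c' k) x by apply: bigmin_le.
have Fle0 x : F x <= G ord0 / b + mdist (c' ord0) x by apply: bigmin_le_id.
have lF : Lip1 F.
  have h x y : F x - mdist x y <= F y.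
    apply: le_bigmin => [|k _].
      have := Fle0 x; have := metric_triangle (c' ord0) y x.
      rewrite (metric_sym y x); lra.
    have := Fle x k; have := metric_triangle (c' k) y x.
    rewrite (metric_sym y x); lra.
  move=> x y; rewrite ler_norml; have := h x y; have := h y x.
  rewrite (metric_sym y x); lra.
have Gb k k' : G k / b <= G k' / b + mdist (c' k') (c' k).
  have := hG k k'; rewrite ler_norml => /andP [_ h].
  rewrite -lerBlDl -mulrBl ler_pdivrMr // metric_sym mulrC //.
have Fc k : F (c' k) = G k / b.
  apply/eqP; rewrite eq_le; apply/andP; split.
    by have := Fle (c' k) k; rewrite mdistxx addr0.
  by apply: le_bigmin => [|k' _]; apply: Gb.
rewrite (eq_bigr (fun k => b * (F (c' k) * (u' k - v' k)))); last first.
  by move=> k _; rewrite Fc; field.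
rewrite -mulr_sumr normrM ger0_norm // EFinM.
by apply: lee_wpmul2l; [rewrite lee_fin | exact: hE'].
Qed.

Hypotheses (u0 : forall k, 0 <= u k) (v0 : forall k, 0 <= v k).

Section multi.
Variables (m : nat) (a : 'I_m -> R) (g : {ffun 'I_m -> 'I_N} -> R).
Hypothesis a0 : forall i, 0 <= a i.
Hypothesis hg : forall k k' : {ffun 'I_m -> 'I_N},
  `|g k - g k'| <= \sum_(i < m) a i * mdist (c (k i)) (c (k' i)).

Let Rt (t : 'I_m) (ka : {ffun 'I_m -> 'I_N}) :=
  \prod_(i < m | i != t) (if (i < t)%N then v (ka i) else u (ka i)).

Let Rt_ge0 t ka : 0 <= Rt t ka.
Proof. by apply: prodr_ge0 => i _; case: ifP. Qed.

Let sumRt t k : \sum_(ka : {ffun 'I_m -> 'I_N} | ka t == k) Rt t ka = 1.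
Proof.
pose w' (i : 'I_m) (y : 'I_N) :=
  if i == t then (y == k)%:R else (if (i < t)%N then v y else u y).
have H : \prod_(i < m) \sum_(y < N) w' i y = 1.
  apply: big1 => i _; rewrite /w'; case: eqP => _.
    by rewrite (bigD1 k) //= eqxx big1 ?addr0 // => y /negbTE ->.
  by case: (i < t)%N.
rewrite bigA_distr_bigA /= in H; rewrite -H big_mkcond /=.
apply: eq_bigr => ka _; rewrite (bigD1 t) //= /w' eqxx.
case: eqP => _; last by rewrite mul0r.
rewrite mul1r; apply: eq_bigr => i it; by rewrite (negbTE it).
Qed.

Let G (t : 'I_m) (k : 'I_N) :=
  \sum_(ka : {ffun 'I_m -> 'I_N} | ka t == k) g ka * Rt t ka.

Let G_lip t k k' : `|G t k - G t k'| <= a t * mdist (c k) (c k').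
Proof.
case: (eqVneq k k') => [<-|kk'].
  by rewrite subrr normr0 mulr_ge0 // mdist_ge0.
pose sw y := if y == k then k' else if y == k' then k else y.
have swK : involutive sw.
  move=> y; rewrite /sw; case: (eqVneq y k) => [->|yk].
    by rewrite [k' == k]eq_sym (negbTE kk') eqxx.
  case: (eqVneq y k') => [->|yk']; first by rewrite eqxx.
  by rewrite (negbTE yk) (negbTE yk').
pose sg (ka : {ffun 'I_m -> 'I_N}) : {ffun 'I_m -> 'I_N} :=
  [ffun i => if i == t then sw (ka i) else ka i].
have sgt ka : sg ka t = sw (ka t) by rewrite ffunE eqxx.
have sgK : involutive sg.
  move=> ka; apply/ffunP => i; rewrite !ffunE; case: eqP => [->|//].
  by rewrite swK.
have swk' y : (sw y == k') = (y == k).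
  rewrite /sw; case: (eqVneq y k) => [_|yk]; first by rewrite eqxx.
  case: (eqVneq y k') => [_|yk']; first by apply/negbTE.
  by apply/negbTE.
have e1 : G t k' = \sum_(ka : {ffun 'I_m -> 'I_N} | ka t == k) g (sg ka) * Rt t (sg ka).
  rewrite /G (reindex_inj (inv_inj sgK)) /=.
  by apply: eq_bigl => ka; rewrite sgt swk'.
have RtS ka : Rt t (sg ka) = Rt t ka.
  by apply: eq_bigr => i it; rewrite ffunE (negbTE it).
have gS (ka : {ffun 'I_m -> 'I_N}) : ka t == k -> `|g ka - g (sg ka)| <= a t * mdist (c k) (c k').
  move=> /eqP kt; apply: (le_trans (hg ka (sg ka))).
  rewrite (bigD1 t) //= big1 ?addr0.
    by rewrite sgt kt /sw eqxx.
  by move=> i it; rewrite ffunE (negbTE it) mdistxx mulr0.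
rewrite e1 /G -sumrB.
rewrite (eq_bigr (fun ka => (g ka - g (sg ka)) * Rt t ka)); last first.
  by move=> ka _; rewrite RtS mulrBl.
apply: (le_trans (ler_norm_sum _ _ _)).
apply: (@le_trans _ _ (\sum_(ka : {ffun 'I_m -> 'I_N} | ka t == k)
   a t * mdist (c k) (c k') * Rt t ka)).
  apply: ler_sum => ka kt; rewrite normrM (ger0_norm (Rt_ge0 _ _)).
  by apply: ler_wpM2r => //; apply: gS.
by rewrite -mulr_sumr sumRt mulr1.
Qed.

Lemma discrete :
  (`| \sum_(ka : {ffun 'I_m -> 'I_N}) g ka *
        (\prod_(i < m) u (ka i) - \prod_(i < m) v (ka i)) |%:E
   <= (\sum_(i < m) a i)%:E * E)%E.
Proof.
pose W (t : nat) (ka : {ffun 'I_m -> 'I_N}) :=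
  \prod_(i < m) (if (i < t)%N then v (ka i) else u (ka i)).
have W0 (ka : {ffun 'I_m -> 'I_N}) : \prod_(i < m) u (ka i) = W 0%N ka by [].
have Wm (ka : {ffun 'I_m -> 'I_N}) : \prod_(i < m) v (ka i) = W m ka.
  by apply: eq_bigr => i _; rewrite ltn_ord.
have hW (t : 'I_m) (ka : {ffun 'I_m -> 'I_N}) : W t ka - W t.+1 ka = (u (ka t) - v (ka t)) * Rt t ka.
  rewrite /W (bigD1 t) //= [X in _ - X](bigD1 t) //= ltnn ltnSn mulrBl.
  congr (_ - _ * _); apply: eq_bigr => i it.
  have it' : (nat_of_ord i == nat_of_ord t) = false by apply/negbTE.
  by rewrite ltnS leq_eqVlt it'.
have tel (ka : {ffun 'I_m -> 'I_N}) : W 0%N ka - W m ka = \sum_(t < m) (W t ka - W t.+1 ka).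
  rewrite -opprB -(telescope_sumr (fun t => W t ka) (leq0n m)) -sumrN big_mkord.
  by apply: eq_bigr => t _; rewrite opprB.
rewrite (eq_bigr (fun ka => \sum_(t < m) g ka * ((u (ka t) - v (ka t)) * Rt t ka)));
  last by move=> ka _; rewrite W0 Wm tel mulr_sumr; apply: eq_bigr => t _; rewrite hW.
rewrite exchange_big /=.
have hS (t : 'I_m) : \sum_(ka : {ffun 'I_m -> 'I_N}) g ka * ((u (ka t) - v (ka t)) * Rt t ka)
    = \sum_(k < N) G t k * (u k - v k).
  rewrite (partition_big (fun ka : {ffun 'I_m -> 'I_N} => ka t) xpredT) //=.
  apply: eq_bigr => k _; rewrite /G mulr_suml.
  by apply: eq_bigr => ka /eqP ->; ring.
rewrite (eq_bigr _ (fun t _ => hS t)).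
apply: (@le_trans _ _ ((\sum_(t < m) `|\sum_(k < N) G t k * (u k - v k)|)%:E)).
  by rewrite lee_fin ler_norm_sum.
rewrite -sumEFin -sumEFin ge0_sume_distrl; last by move=> i _; rewrite lee_fin.
apply: lee_sum => t _; apply: one_dim => // k k'; exact: G_lip.
Qed.

End multi.

End F.

Set Implicit Arguments. Unset Strict Implicit.

Section G.
Variables (R : realType) (X : metricType R).

Lemma compact_image m (phi : ('I_m -> X) -> X) (K : set X) :
  maxm_continuous phi -> compact K ->
  compact (phi @` [set x | forall i, K (x i)]).
Proof.
move=> cphi cK.
have := tychonoff (T := fun _ : 'I_m => X) (fun _ => cK).
apply: continuous_compact; apply: continuous_subspaceT => x.
apply/(@cvg_ballP _ _ _ _ (nbhs_filter x)) => e e0.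
have [d d0 hd] := cphi x e e0.
have H : \forall y \near x, forall i : 'I_m, ball (x i) d (y i).
  apply: (@filter_forall _ _ _ (nbhs x) (nbhs_filter x)) => i.
  have := @cvg_ball _ _ _ _ (nbhs_filter x) (@proj _ (fun _ : 'I_m => X) i) (x i)
    (@proj_continuous _ (fun _ : 'I_m => X) i x) d d0.
  by [].
apply: filterS H => y hy; rewrite ballEmdist /=; apply: hd => i.
by have := hy i; rewrite ballEmdist.
Qed.

End G.


Set Implicit Arguments. Unset Strict Implicit.
Section H.
Variables (R : realType) (X : metricType R) (x0 : X).

Lemma rect_meas m (B : 'I_m -> set X) :
  (forall i, measurable (B i : set (BorelX x0))) ->
  measurable ([set x : 'I_m -> X | forall i, B i (x i)] : set (BorelXm x0 m)).
Proof.
move=> mB.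
have -> : [set x : 'I_m -> X | forall i, B i (x i)] =
   \big[setI/setT]_(i < m) ((fun x : 'I_m -> X => x i) @^-1` B i).
  apply/seteqP; split => x.
    move=> hx; elim/big_ind: _ => [//|A C HA HC|i _ /=]; [by split|exact: hx].
  move=> hx i; move: hx; rewrite (bigD1 i) //=; by case.
apply: bigsetI_measurable => i _.
rewrite -[X in measurable X]setTI.
exact: (@proj_measurable R X x0 m i) (mB i).
Qed.

Lemma prob_compl (mu : {measure set (BorelX x0) -> \bar R}) (K : set X) :
  mu setT = 1%E -> measurable (K : set (BorelX x0)) -> mu (~` K) = 0%E ->
  mu K = 1%E.
Proof.
move=> m1 mK n0.
have H : mu setT = (mu (setT `\` K) + mu (setT `&` K))%E := measureDI mu measurableT mK.
by rewrite setTD setTI m1 n0 add0e in H.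
Qed.

Lemma tri4 (A B r1 r2 d : R) : `|r1 - A| <= d -> `|r2 - B| <= d ->
  `|A - B| <= `|r1 - r2| + 2 * d.
Proof.
rewrite !ler_norml => /andP [h1 h2] /andP [h3 h4].
have := ler_norm (r1 - r2); have := ler_norm (- (r1 - r2)); rewrite normrN.
move=> h5 h6; apply/andP; split; lra.
Qed.

Lemma chain5 (r1 A1 B1 B2 A2 r2 : R) : `|r1 - r2| <=
  `|r1 - A1| + `|A1 - B1| + `|B1 - B2| + `|B2 - A2| + `|A2 - r2|.
Proof.
have := ler_norm (r1 - A1); have := ler_norm (- (r1 - A1)).
have := ler_norm (A1 - B1); have := ler_norm (- (A1 - B1)).
have := ler_norm (B1 - B2); have := ler_norm (- (B1 - B2)).
have := ler_norm (B2 - A2); have := ler_norm (- (B2 - A2)).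
have := ler_norm (A2 - r2); have := ler_norm (- (A2 - r2)).
rewrite !normrN => *; rewrite ler_norml; apply/andP; split; lra.
Qed.

End H.

Unset Implicit Arguments. Set Strict Implicit.
Theorem mainTheorem2 (R : realType) (X : metricType R) (x0 : X) (m L : nat)
  (a : 'I_m -> R) (phi : 'I_L -> ('I_m -> X) -> X) (p : 'I_L -> R) :
  (0 < m)%N ->
  (forall i, 0 <= a i) -> \sum_(i < m) a i < 1 ->
  (forall j, maxm_continuous (phi j)) ->
  (forall j, 0 < p j) -> \sum_(j < L) p j = 1 ->
  (forall j, gifs_contraction a (phi j)) ->
  forall (mu nu : {measure set (BorelX x0) -> \bar R})
         (pimu pinu : {measure set (BorelXm x0 m) -> \bar R})
         (Mmu Mnu : {measure set (BorelX x0) -> \bar R}),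
  in_PX mu -> in_PX nu ->
  is_product_measure (fun _ => mu) pimu ->
  is_product_measure (fun _ => nu) pinu ->
  (forall B, measurable (B : set (BorelX x0)) ->
     Mmu B = (\sum_(j < L) (p j)%:E * pimu (phi j @^-1` B))%E) ->
  (forall B, measurable (B : set (BorelX x0)) ->
     Mnu B = (\sum_(j < L) (p j)%:E * pinu (phi j @^-1` B))%E) ->
  [/\ in_PX Mmu, in_PX Mnu &
      (dMK Mmu Mnu <= (\sum_(i < m) a i)%:E * dMK mu nu)%E].
Proof.
move=> m0 a0 as1 cphi p0 p1 contr mu nu pimu pinu Mmu Mnu
  [mu1 [Km [cKm nKm]]] [nu1 [Kn [cKn nKn]]] hpm hpn hMm hMn.
set s := \sum_(i < m) a i.
have s0 : 0 <= s by rewrite sumr_ge0.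
set K := Km `|` Kn.
have cK : compact K := compactU cKm cKn.
have mK : measurable (K : set (BorelX x0)) := compact_meas cK.
have nmK : mu (~` K) = 0%E.
  apply: (subset_measure0 (measurableC mK) (measurableC (compact_meas cKm))) => //.
  by move=> x nK Kx; apply: nK; left.
have nnK : nu (~` K) = 0%E.
  apply: (subset_measure0 (measurableC mK) (measurableC (compact_meas cKn))) => //.
  by move=> x nK Kx; apply: nK; right.
have muK := prob_compl mu1 mK nmK.
have nuK := prob_compl nu1 mK nnK.
set Kr := [set x : 'I_m -> X | forall i, K (x i)].
have mKr : measurable (Kr : set (BorelXm x0 m)) := rect_meas (fun _ => mK).
have prodT (pi : {measure set (BorelXm x0 m) -> \bar R})
           (rho : {measure set (BorelX x0) -> \bar R}) :
    rho setT = 1%E -> rho K = 1%E -> is_product_measure (fun _ => rho) pi ->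
    [/\ pi setT = 1%E, pi Kr = 1%E & pi (~` Kr) = 0%E].
  move=> r1 rK hp.
  have p1' : pi setT = 1%E.
    have := hp (fun _ => setT) (fun _ => measurableT).
    rewrite (_ : [set x | forall i, setT (x i)] = setT); last by apply/seteqP; split.
    by move=> ->; rewrite big1.
  have pK : pi Kr = 1%E.
    by have := hp (fun _ => K) (fun _ => mK); rewrite big1.
  split => //.
  have pT : (pi setT < +oo)%E by rewrite p1' ltry.
  have H : pi (setT `\` Kr) = (pi setT - pi (setT `&` Kr))%E :=
    measureD measurableT mKr pT.
  by rewrite setTD setTI p1' pK subee in H.
have [pm1 pmK npm] := prodT pimu mu mu1 muK hpm.
have [pn1 pnK npn] := prodT pinu nu nu1 nuK hpn.
set K' := \big[setU/set0]_(j < L) (phi j @` Kr).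
have cK' : compact K'.
  rewrite /K'; elim/big_ind: _ => [|A B|j _]; first exact: compact0.
    exact: compactU.
  exact: compact_image (cphi j) cK.
have mK' : measurable (K' : set (BorelX x0)) := compact_meas cK'.
have phiK j x : Kr x -> K' (phi j x).
  by move=> Krx; apply: (bigsetU_in (mem_index_enum j)); exists x.
have mphi j : measurable_fun setT (phi j : BorelXm x0 m -> BorelX x0) :=
  cont_measurable (cphi j).
have pre_meas j (B : set (BorelX x0)) : measurable B ->
    measurable (phi j @^-1` B : set (BorelXm x0 m)).
  by move=> mB; rewrite -[X in measurable X]setTI; apply: (mphi j).
have inPX (pi : {measure set (BorelXm x0 m) -> \bar R})
          (M : {measure set (BorelX x0) -> \bar R}) :
    pi setT = 1%E -> pi (~` Kr) = 0%E ->
    (forall B, measurable (B : set (BorelX x0)) ->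
       M B = (\sum_(j < L) (p j)%:E * pi (phi j @^-1` B))%E) ->
    in_PX M /\ M (~` K') = 0%E.
  move=> pi1 npi hM.
  have MK : M (~` K') = 0%E.
    rewrite hM; last exact: measurableC.
    apply: big1 => j _.
    rewrite (_ : pi _ = 0%E) ?mule0 //.
    apply: (subset_measure0 (pre_meas j _ (measurableC mK')) (measurableC mKr)) => //.
    by move=> x hx Krx; apply: hx; apply: phiK.
  split => //; split; last by exists K'.
  rewrite hM // (eq_bigr (fun j => (p j)%:E)); last first.
    by move=> j _; rewrite preimage_setT pi1 mule1.
  by rewrite sumEFin p1.
have [PXm nMm] := inPX pimu Mmu pm1 npm hMm.
have [PXn nMn] := inPX pinu Mnu pn1 npn hMn.
split => //.
have Mm1 : Mmu setT = 1%E by case: PXm.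
have Mn1 : Mnu setT = 1%E by case: PXn.
have hD F : Lip1 F ->
    (`| \int[mu]_x (F x)%:E - \int[nu]_x (F x)%:E | <= dMK mu nu)%E.
  by move=> lF; apply: ereal_sup_ubound; exists F.
have lip0 : Lip1 (fun _ : X => (0 : R)).
  by move=> x y; rewrite subrr normr0 mdist_ge0.
have D0 : (0 <= dMK mu nu)%E := le_trans (abse_ge0 _) (hD _ lip0).
rewrite {1}/dMK; apply: ge_ereal_sup => _ [f lf <-].
apply/lee_addgt0Pr => eps eps0.
set C := 4 + 4 * s.
have C0 : 0 < C by rewrite /C; lra.
set dl := eps / C.
have dl0 : 0 < dl by rewrite /dl divr_gt0.
have [N [c [P [mP dP UP hc]]]] := cover_part x0 cK dl0.
have [N' [e [Q [mQ dQ UQ he]]]] := cover_part x0 cK' dl0.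
have nPm : mu (~` \big[setU/set0]_(k < N) P k) = 0%E by rewrite UP.
have nPn : nu (~` \big[setU/set0]_(k < N) P k) = 0%E by rewrite UP.
pose wm k := fine (mu (P k)).
pose wn k := fine (nu (P k)).
have wm0 k : 0 <= wm k := fine_ge0m _ _.
have wn0 k : 0 <= wn k := fine_ge0m _ _.
have wm1 : \sum_(k < N) wm k = 1.
  have := fine_part mu1 mP dP nPm measurableT; rewrite mu1 /= => ->.
  by apply: eq_bigr => k _; rewrite setTI.
have wn1 : \sum_(k < N) wn k = 1.
  have := fine_part nu1 mP dP nPn measurableT; rewrite nu1 /= => ->.
  by apply: eq_bigr => k _; rewrite setTI.
have hE F : Lip1 F -> (`| \sum_(k < N) F (c k) * (wm k - wn k) |%:E
    <= dMK mu nu + (2 * dl)%:E)%E.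
  move=> lF.
  have [r1 [i1 b1]] := Qlem dl0 mu1 lF mP dP nPm hc.
  have [r2 [i2 b2]] := Qlem dl0 nu1 lF mP dP nPn hc.
  have := hD F lF; rewrite i1 i2 -EFinB abse_EFin => hr.
  apply: (@le_trans _ _ ((`|r1 - r2| + 2 * dl)%:E)); last first.
    by rewrite EFinD; apply: leeD.
  rewrite lee_fin (eq_bigr (fun k => F (c k) * wm k - F (c k) * wn k));
    last by move=> k _; rewrite mulrBr.
  by rewrite sumrB; apply: tri4.
pose g j (ka : {ffun 'I_m -> 'I_N}) := f (phi j (fun i => c (ka i))).
have hg j (ka ka' : {ffun 'I_m -> 'I_N}) :
    `|g j ka - g j ka'| <= \sum_(i < m) a i * mdist (c (ka i)) (c (ka' i)).
  exact: (le_trans (lf _ _) (contr j _ _)).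
have Dj j := discrete wm1 wn1 hE wm0 wn0 a0 (hg j).
pose Rk (ka : {ffun 'I_m -> 'I_N}) :=
  [set x : 'I_m -> X | forall i, P (ka i) (x i)].
have mRk ka : measurable (Rk ka : set (BorelXm x0 m)).
  exact: (rect_meas (fun i => mP (ka i))).
have dRk (ka ka' : {ffun 'I_m -> 'I_N}) : ka != ka' ->
    Rk ka `&` Rk ka' = set0.
  move=> kk'.
  have [i ki] : exists i, ka i != ka' i.
    apply/existsP; apply: contraNT kk' => /existsPn H.
    by apply/eqP/ffunP => i; apply/eqP; move: (H i); rewrite negbK.
  apply/seteqP; split => // x [h1 h2].
  have H : (P (ka i) `&` P (ka' i)) (x i) by split; [apply: h1|apply: h2].
  by rewrite dP in H.
have nRk (pi : {measure set (BorelXm x0 m) -> \bar R}) : pi (~` Kr) = 0%E ->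
    pi (~` \big[setU/set0]_(ka : {ffun 'I_m -> 'I_N}) Rk ka) = 0%E.
  move=> npi.
  have mU : measurable (\big[setU/set0]_(ka : {ffun 'I_m -> 'I_N}) Rk ka
      : set (BorelXm x0 m)) by apply: bigsetU_measurable => ka _; exact: mRk.
  suff sub : ~` (\big[setU/set0]_(ka : {ffun 'I_m -> 'I_N}) Rk ka) `<=` ~` Kr.
    exact: (subset_measure0 (measurableC mU) (measurableC mKr) sub npi).
  move=> x nU Krx; apply: nU.
  have hk i : exists k, P k (x i).
    have := Krx i; rewrite -UP => Ux.
    by have [k _ Pk] := in_bigsetU Ux; exists k.
  pose ka := [ffun i => sval (cid (hk i))].
  apply: (bigsetU_in (mem_index_enum ka)) => i.
  by rewrite /ka ffunE; exact: (svalP (cid (hk i))).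
have hRk (pi : {measure set (BorelXm x0 m) -> \bar R})
    (rho : {measure set (BorelX x0) -> \bar R}) ka :
    rho setT = 1%E -> is_product_measure (fun _ => rho) pi ->
    fine (pi (Rk ka)) = \prod_(i < m) fine (rho (P (ka i))).
  move=> r1 hp; rewrite /Rk (hp (fun i => P (ka i)) (fun i => mP (ka i))).
  rewrite (eq_bigr (fun i => (fine (rho (P (ka i))))%:E)) ?prodEFin //.
  by move=> i _; rewrite fineK // fin1.
have hz ka x j : Rk ka x -> mdist (phi j x) (phi j (fun i => c (ka i))) <= s * dl.
  move=> hx; apply: (le_trans (contr j _ _)).
  rewrite /s mulr_suml; apply: ler_sum => i _; apply: ler_wpM2l => //.
  by rewrite metric_sym; apply/ltW/hc/hx.
have nQ (pi : {measure set (BorelXm x0 m) -> \bar R}) : pi (~` Kr) = 0%E ->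
    forall j, pi (~` \big[setU/set0]_(l < N') (phi j @^-1` Q l)) = 0%E.
  move=> npi j.
  have mU : measurable (\big[setU/set0]_(l < N') (phi j @^-1` Q l)
      : set (BorelXm x0 m)) by apply: bigsetU_measurable => l _; apply: pre_meas.
  suff sub : ~` (\big[setU/set0]_(l < N') (phi j @^-1` Q l)) `<=` ~` Kr.
    exact: (subset_measure0 (measurableC mU) (measurableC mKr) sub npi).
  move=> x nU Krx; apply: nU.
  have := phiK j x Krx; rewrite -UQ => Ux.
  have [l _ Ql] := in_bigsetU Ux.
  exact: (bigsetU_in (mem_index_enum l)).
have p0' j : 0 <= p j := ltW (p0 j).
have nMQm : Mmu (~` \big[setU/set0]_(l < N') Q l) = 0%E by rewrite UQ.
have nMQn : Mnu (~` \big[setU/set0]_(l < N') Q l) = 0%E by rewrite UQ.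
have [r1 [i1 b1]] := Qlem dl0 Mm1 lf mQ dQ nMQm he.
have [r2 [i2 b2]] := Qlem dl0 Mn1 lf mQ dQ nMQn he.
have G1m := G1 p0' p1 lf pm1 mphi hMm mRk dRk (nRk _ npm) hz mQ dQ (nQ _ npm) he.
have G1n := G1 p0' p1 lf pn1 mphi hMn mRk dRk (nRk _ npn) hz mQ dQ (nQ _ npn) he.
pose A1 := \sum_(l < N') f (e l) * fine (Mmu (Q l)).
pose A2 := \sum_(l < N') f (e l) * fine (Mnu (Q l)).
pose B1 := \sum_(j < L) p j * \sum_(ka : {ffun 'I_m -> 'I_N})
   g j ka * \prod_(i < m) wm (ka i).
pose B2 := \sum_(j < L) p j * \sum_(ka : {ffun 'I_m -> 'I_N})
   g j ka * \prod_(i < m) wn (ka i).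
have G1m' : `|A1 - B1| <= dl + s * dl.
  move: G1m; congr (`|_ - _| <= _); apply: eq_bigr => j _; congr (_ * _).
  by apply: eq_bigr => ka _; rewrite (hRk _ _ _ mu1 hpm).
have G1n' : `|A2 - B2| <= dl + s * dl.
  move: G1n; congr (`|_ - _| <= _); apply: eq_bigr => j _; congr (_ * _).
  by apply: eq_bigr => ka _; rewrite (hRk _ _ _ nu1 hpn).
pose T j := \sum_(ka : {ffun 'I_m -> 'I_N})
   g j ka * (\prod_(i < m) wm (ka i) - \prod_(i < m) wn (ka i)).
have eB : B1 - B2 = \sum_(j < L) p j * T j.
  rewrite /B1 /B2 -sumrB; apply: eq_bigr => j _; rewrite -mulrBr -sumrB.
  by congr (_ * _); apply: eq_bigr => ka _; rewrite mulrBr.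
have hB : (`|B1 - B2|%:E <= s%:E * dMK mu nu + (s * (2 * dl))%:E)%E.
  rewrite eB.
  apply: (@le_trans _ _ ((\sum_(j < L) p j * `|T j|)%:E)).
    rewrite lee_fin; apply: (le_trans (ler_norm_sum _ _ _)); apply: ler_sum => j _.
    by rewrite normrM ger0_norm.
  rewrite -sumEFin.
  apply: (@le_trans _ _ (\sum_(j < L) (p j)%:E * (s%:E * (dMK mu nu + (2 * dl)%:E)))%E).
    apply: lee_sum => j _; rewrite EFinM; apply: lee_wpmul2l; first by rewrite lee_fin.
    exact: Dj j.
  rewrite -ge0_sume_distrl; last by move=> j _; rewrite lee_fin.
  rewrite sumEFin p1 mul1e ge0_muleDr // -?EFinM //.
  by rewrite lee_fin mulr_ge0 // ltW.
rewrite i1 i2 -EFinB abse_EFin.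
have hr := chain5 r1 A1 B1 B2 A2 r2.
rewrite (distrC B2 A2) (distrC A2 r2) in hr.
apply: (@le_trans _ _ ((4 * dl + 2 * (s * dl))%:E + `|B1 - B2|%:E)%E).
  rewrite -EFinD lee_fin; move: b1 b2 G1m' G1n' hr; rewrite /A1 /A2 => *; lra.
apply: le_trans (leeD2l _ hB) _.
rewrite addeCA -EFinD; apply: leeD2l; rewrite lee_fin le_eqVlt; apply/orP; left.
apply/eqP; rewrite /dl /C; field.
by rewrite gt_eqF //; lra.
Qed.
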